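(* Let $\lambda\neq 0$ and let the numbers $a_i(N;\lambda)$ ($N\ge 0$, $0\le i\le N$) be defined as in the context. Then: (i) $a_0(0;\lambda)=\frac{1}{\lambda}$, $a_0(1;\lambda)=1$, $a_1(1;\lambda)=-1$; (ii) for all $N\ge 0$, $a_0(N+1;\lambda)=(N+\lambda)_N$ and $a_{N+1}(N+1;\lambda)=(-1)^{N+1}\lambda^N (N+1)!$; (iii) for all $N\ge 1$ and $1\le k\le N$, $$a_k(N+1;\lambda)=-k\lambda\sum_{i_1=0}^{N-k+1}\bigl(N+(k+1)\lambda\bigr)_{i_1}\,a_{k-1}(N-i_1;\lambda).$$
   Context: Here $(x)_n=x(x-1)\cdots(x-n+1)$ for $n\ge 1$ and $(x)_0=1$ (falling factorial). Let $F(t)=F(t;\lambda)=\frac{1}{(1+t)^{\lambda}+1}$. The numbers $a_i(N;\lambda)$ are the coefficients for which, for every $N\ge 0$, $$\left(\frac{d}{dt}\right)^N F(t)=\frac{(-1)^N\lambda}{(1+t)^N}\sum_{i=1}^{N+1}a_{i-1}(N;\lambda)F(t)^i;$$ concretely, they are defined recursively by $a_0(0;\lambda)=1/\lambda$ and, for $N\ge 0$: $a_0(N+1;\lambda)=(N+\lambda)a_0(N;\lambda)$, $a_{N+1}(N+1;\lambda)=-(N+1)\lambda\,a_N(N;\lambda)$, and $a_{k}(N+1;\lambda)=-k\lambda\,a_{k-1}(N;\lambda)+(N+(k+1)\lambda)a_{k}(N;\lambda)$ for $1\le k\le N$. (Equivalently, $P_N(x)=\lambda\sum_{i=1}^{N+1}a_{i-1}(N;\lambda)x^i$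 satisfies $P_0(x)=x$ and $P_{N+1}(x)=NP_N(x)+\lambda(x-x^2)P_N'(x)$.) *)

(* Defs.v *)
From mathcomp Require Import all_boot all_order all_algebra.
Set Implicit Arguments. Unset Strict Implicit. Unset Printing Implicit Defensive.
Import Order.TTheory GRing.Theory Num.Theory.
Local Open Scope ring_scope.

Definition ffact {R : ringType} (x : R) (n : nat) : R :=
  \prod_(i < n) (x - i%:R).

(* acoef l N k = a_k(N; l), defined by the recursion of the paper;
   set to 0 outside the range 0 <= k <= N (never used there). *)
Fixpoint acoef {R : fieldType} (l : R) (N k : nat) : R :=
  match N with
  | 0 => if k == 0%N then l^-1 else 0
  | N'.+1 =>
      if k == 0%N then (N'%:R + l) * acoef l N' 0
      else if k == N'.+1 then - (N'.+1%:R * l) * acoef l N' N'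
      else if (k <= N')%N then
        - (k%:R * l) * acoef l N' k.-1 + (N'%:R + k.+1%:R * l) * acoef l N' k
      else 0
  end.

(* Main.v *)
Require Import Defs.
From mathcomp Require Import all_boot all_order all_algebra.
From mathcomp Require Import ring.
Import GRing.Theory.
Local Open Scope ring_scope.

Lemma ffactS (R : fieldType) (x : R) n : ffact x n.+1 = x * ffact (x - 1) n.
Proof.
rewrite /ffact big_ord_recl /= subr0; congr (_ * _).
by apply: eq_bigr => i _; rewrite /bump /= add1n -addn1 natrD; ring.
Qed.

Lemma arec (R : fieldType) (l : R) n k : (1 <= k <= n)%N ->
  acoef l n.+1 k = - (k%:R * l) * acoef l n k.-1 + (n%:R + k.+1%:R * l) * acoef l n k.
Proof.
case/andP=> k1 kn /=.
have -> : (k == 0%N) = false by case: k k1 kn.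
have -> : (k == n.+1) = false by apply/negbTE; rewrite neq_ltn ltnS kn.
by rewrite kn.
Qed.

Lemma adiag (R : fieldType) (l : R) k : (1 <= k)%N ->
  acoef l k k = - (k%:R * l) * acoef l k.-1 k.-1.
Proof. case: k => // k _; rewrite [LHS]/= eqxx; case: k => //. Qed.

Lemma main (R : fieldType) (l : R) m k : (1 <= k)%N ->
  acoef l (k + m).+1 k = - (k%:R * l) *
    \sum_(i < m.+2) ffact ((k + m)%:R + k.+1%:R * l) i * acoef l (k + m - i) k.-1.
Proof.
move=> k1; elim: m => [|m IH].
  rewrite addn0 arec ?k1 ?leqnn // adiag // !big_ord_recl big_ord0 /=.
  rewrite /ffact big_ord0 big_ord1 subn0 subr0 /bump /= add1n subn1 /=; ring.
rewrite addnS arec; last by rewrite k1 /= ltnW // ltnS leq_addr.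
have f0 (x:R) : ffact x 0 = 1 by rewrite /ffact big_ord0.
rewrite IH [in RHS]big_ord_recl subn0 f0 mul1r mulrDr.
congr (_ + _); rewrite mulrCA; congr (_ * _); rewrite big_distrr /=.
apply: eq_bigr => i _; rewrite /bump /= add1n ffactS subSS mulrA; congr (_ * _ * _).
by congr ffact; rewrite -addn1 natrD; ring.
Qed.

Theorem theorem1 (R : fieldType) (l : R) (hl : l != 0) :
  [/\ acoef l 0 0 = l^-1, acoef l 1 0 = 1, acoef l 1 1 = -1,
      (forall N : nat,
         acoef l N.+1 0 = ffact (N%:R + l) N /\
         acoef l N.+1 N.+1 = (-1) ^+ N.+1 * l ^+ N * (N.+1)`!%:R)
    & (forall N k : nat, (1 <= N)%N -> (1 <= k <= N)%N ->
         acoef l N.+1 k =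
           - (k%:R * l) *
             \sum_(0 <= i1 < (N - k + 1).+1)
                ffact (N%:R + k.+1%:R * l) i1 * acoef l (N - i1) k.-1)].
Proof.
have a10 : acoef l 1 0 = 1 by rewrite /= add0r mulfV.
have a11 : acoef l 1 1 = -1 by rewrite /= mul1r mulNr mulfV.
split => //.
- elim=> [|N [IH0 IH1]]; first by rewrite a10 a11 /ffact big_ord0 expr0 mulr1 mulN1r.
  split.
    rewrite (_ : acoef l N.+2 0 = (N.+1%:R + l) * acoef l N.+1 0) // IH0 ffactS; congr (_ * _).
    by congr ffact; rewrite -addn1 natrD; ring.
  rewrite (_ : acoef l N.+2 N.+2 = - (N.+2%:R * l) * acoef l N.+1 N.+1); last by rewrite /= eqxx.
  rewrite IH1 !exprS [in RHS]factS natrM; ring.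
- move=> N k _ /andP[k1 kN].
  rewrite big_mkord -(subnKC kN) main //.
  have -> : (k + (N - k) - k + 1 = (N - k).+1)%N by rewrite addKn addn1.
  by [].
Qed.
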